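(* Let $d=2^n$ and let $\mathcal{C}_i$ and $\mathcal{C}_j$ ($i\neq j$) be two disjoint maximal commuting classes of $n$-qubit Pauli operators. Then every operator $U\in\mathcal{C}_i$ commutes with exactly $2^{n-1}-1$ elements of $\mathcal{C}_j$, and this set of $2^{n-1}-1$ elements is unique to $U$: no two distinct elements of $\mathcal{C}_i$ commute with the same set of $2^{n-1}-1$ operators of $\mathcal{C}_j$.
   Context: The $n$-qubit Pauli operators are the $4^n$ tensor products $P_1\otimes\cdots\otimes P_n$ with $P_k\in\{I,X,Y,Z\}$; products are taken up to a phase. A maximal commuting class is a set of $2^n-1$ mutually commuting non-identity $n$-qubit Pauli operators; together with the identity it forms (up to phases) an abelian group generated by $n$ of its elements. *)

(* Defs.v *)
From HB Require Import structures.
From mathcomp Require Import all_boot.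
Set Implicit Arguments. Unset Strict Implicit. Unset Printing Implicit Defensive.

(* Single-qubit Pauli operators (up to phase). *)
Inductive pauli1 := PI | PX | PY | PZ.

Definition pauli1_code (p : pauli1) : bool * bool :=
  match p with PI => (false, false) | PX => (true, false)
             | PY => (true, true) | PZ => (false, true) end.
Definition pauli1_decode (c : bool * bool) : pauli1 :=
  match c with (false, false) => PI | (true, false) => PX
             | (true, true) => PY | (false, true) => PZ end.
Lemma pauli1_codeK : cancel pauli1_code pauli1_decode.
Proof. by case. Qed.

HB.instance Definition _ := Equality.copy pauli1 (can_type pauli1_codeK).
HB.instance Definition _ := Choice.copy pauli1 (can_type pauli1_codeK).
HB.instance Definition _ := Countable.copy pauli1 (can_type pauli1_codeK).
HB.instance Definition _ := Finite.copy pauli1 (can_type pauli1_codeK).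

Definition pauli (n : nat) := {ffun 'I_n -> pauli1}.

Definition pauli_id (n : nat) : pauli n := [ffun => PI].

(* Two single-qubit Pauli matrices commute iff one is I or they are equal;
   otherwise they anticommute. *)
Definition commute1 (p q : pauli1) : bool := [|| p == PI, q == PI | p == q].

(* Tensor products of Pauli matrices commute iff they anticommute on an
   even number of tensor factors. *)
Definition pauli_commute (n : nat) (P Q : pauli n) : bool :=
  ~~ odd #|[set k : 'I_n | ~~ commute1 (P k) (Q k)]|.

Definition max_commuting_class (n : nat) (C : {set pauli n}) : Prop :=
  [/\ #|C| = (2 ^ n - 1)%N,
      pauli_id n \notin C &
      {in C &, forall P Q, pauli_commute P Q}].

(* Main.v *)
From HB Require Import structures.
From mathcomp Require Import all_boot zify.
Require Import Defs.
Set Implicit Arguments. Unset Strict Implicit. Unset Printing Implicit Defensive.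

Definition add1 (p q : pauli1) : pauli1 :=
  let (a, b) := pauli1_code p in let (c, d) := pauli1_code q in
  pauli1_decode (a (+) c, b (+) d).

Lemma ac1D p q r : ~~ commute1 (add1 p q) r = (~~ commute1 p r) (+) (~~ commute1 q r).
Proof. by case: p; case: q; case: r. Qed.
Lemma ac1C p q : commute1 p q = commute1 q p.
Proof. by case: p; case: q. Qed.
Lemma ac1I p : commute1 PI p. Proof. by case: p. Qed.
Lemma ac1K p : commute1 p p. Proof. by case: p. Qed.
Lemma add1C p q : add1 p q = add1 q p. Proof. by case: p; case: q. Qed.
Lemma add1A p q r : add1 p (add1 q r) = add1 (add1 p q) r.
Proof. by case: p; case: q; case: r. Qed.
Lemma add1K p q : add1 (add1 p q) q = p. Proof. by case: p; case: q. Qed.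
Lemma add1I p : add1 p PI = p. Proof. by case: p. Qed.
Lemma add1nn p : add1 p p = PI. Proof. by case: p. Qed.

Section S.
Variable n : nat.
Local Notation P := (pauli n).

Definition padd (A B : P) : P := [ffun k => add1 (A k) (B k)].
Definition omega (A B : P) : bool := odd #|[set k : 'I_n | ~~ commute1 (A k) (B k)]|.

Lemma commE A B : pauli_commute A B = ~~ omega A B. Proof. by []. Qed.

Lemma card_sum (T : finType) (p : pred T) : #|[set k | p k]| = \sum_k (p k : nat).
Proof.
rewrite -sum1_card big_mkcond; apply: eq_bigr => k _; rewrite inE; by case: (p k).
Qed.

Lemma odd_card_xor (T : finType) (a b : pred T) :
  odd #|[set k | a k (+) b k]| = odd #|[set k | a k]| (+) odd #|[set k | b k]|.
Proof.
rewrite !card_sum.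
have E : \sum_k (a k (+) b k : nat) + (\sum_k (a k && b k : nat)).*2 =
         \sum_k (a k : nat) + \sum_k (b k : nat).
  rewrite -muln2 big_distrl /= -!big_split /=.
  by apply: eq_bigr => k _; case: (a k); case: (b k).
by rewrite -oddD -E oddD odd_double addbF.
Qed.

Lemma omegaD A B C : omega (padd A B) C = omega A C (+) omega B C.
Proof.
rewrite /omega -odd_card_xor; apply/congr1/eq_card => k.
by rewrite !inE ffunE ac1D.
Qed.

Lemma omegaC A B : omega A B = omega B A.
Proof. rewrite /omega; apply/congr1/eq_card => k; by rewrite !inE ac1C. Qed.

Lemma omega0 A : omega (pauli_id n) A = false.
Proof.
rewrite /omega; suff -> : [set k : 'I_n | ~~ commute1 (pauli_id n k) (A k)] = set0 by rewrite cards0.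
by apply/setP => k; rewrite !inE ffunE ac1I.
Qed.

Lemma omegaK A : omega A A = false.
Proof.
rewrite /omega; suff -> : [set k : 'I_n | ~~ commute1 (A k) (A k)] = set0 by rewrite cards0.
by apply/setP => k; rewrite !inE ac1K.
Qed.

Lemma paddK A B : padd (padd A B) B = A.
Proof. by apply/ffunP => k; rewrite !ffunE add1K. Qed.
Lemma paddnn A : padd A A = pauli_id n.
Proof. by apply/ffunP => k; rewrite !ffunE add1nn. Qed.
Lemma padd0 A : padd A (pauli_id n) = A.
Proof. by apply/ffunP => k; rewrite !ffunE add1I. Qed.
Lemma paddC A B : padd A B = padd B A.
Proof. by apply/ffunP => k; rewrite !ffunE add1C. Qed.
Lemma padd_eq0 A B : (padd A B == pauli_id n) = (A == B).
Proof.
apply/eqP/eqP => [h|->]; last exact: paddnn.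
by rewrite -(paddK A B) h paddC padd0.
Qed.

Lemma nondeg A : A != pauli_id n -> exists B, omega A B.
Proof.
move=> h.
have [k hk] : exists k, A k != PI.
  apply/existsP; apply: contraR h; rewrite negb_exists => /forallP h.
  by apply/eqP/ffunP => k; rewrite ffunE; apply/eqP; move: (h k); rewrite negbK.
pose q := if A k == PX then PZ else PX.
exists [ffun j => if j == k then q else PI].
rewrite /omega.
suff -> : [set j : 'I_n | ~~ commute1 (A j) ([ffun j => if j == k then q else PI] j)] = [set k].
  by rewrite cards1.
apply/setP => j; rewrite !inE ffunE.
case: (eqVneq j k) => [->|_]; last by rewrite ac1C ac1I.
by rewrite /q; move: hk; case: (A k).
Qed.


Lemma card_sum_in (G : {set P}) (p : pred P) :
  #|[set g in G | p g]| = \sum_(g in G) (p g : nat).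
Proof.
rewrite card_sum [RHS]big_mkcond; apply: eq_bigr => k _; by case: (k \in G); case: (p k).
Qed.

Definition closed (G : {set P}) := forall g h, g \in G -> h \in G -> padd g h \in G.

Lemma half (G : {set P}) w v : closed G -> w \in G -> omega w v ->
  #|[set g in G | ~~ omega g v]|.*2 = #|G|.
Proof.
move=> cG wG wv.
set A := [set g in G | omega g v]; set B := [set g in G | ~~ omega g v].
have f1 g : g \in A -> padd g w \in B.
  by rewrite !inE omegaD wv addbT => /andP[gG ->]; rewrite cG.
have f2 g : g \in B -> padd g w \in A.
  by rewrite !inE omegaD wv addbT => /andP[gG ->]; rewrite cG.
have l1 : #|A| <= #|B|.
  apply: leq_trans (leq_imset_card (fun g => padd g w) B); apply: subset_leq_card.
  apply/subsetP => a aA; apply/imsetP; exists (padd a w); first exact: f1.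
  by rewrite paddK.
have l2 : #|B| <= #|A|.
  apply: leq_trans (leq_imset_card (fun g => padd g w) A); apply: subset_leq_card.
  apply/subsetP => a aA; apply/imsetP; exists (padd a w); first exact: f2.
  by rewrite paddK.
have eAB : #|A| = #|B| by apply/eqP; rewrite eqn_leq l1 l2.
rewrite -(cardsID [set g | omega g v] G).
have -> : G :&: [set g | omega g v] = A by apply/setP => g; rewrite !inE.
have -> : G :\: [set g | omega g v] = B by apply/setP => g; rewrite !inE andbC.
by rewrite eAB addnn.
Qed.

Definition perp (S : {set P}) := [set v | [forall s in S, ~~ omega s v]].

Lemma closedT : closed [set: P]. Proof. by move=> *; rewrite inE. Qed.

Lemma perp_card (S : {set P}) : closed S -> pauli_id n \in S ->
  #|perp S| * #|S| = #|{: P}|.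
Proof.
move=> cS S0.
set N := #|{: P}|.
have E : \sum_(s in S) \sum_v (~~ omega s v : nat) = \sum_v \sum_(s in S) (~~ omega s v : nat).
  exact: exchange_big.
have L : (\sum_(s in S) \sum_v (~~ omega s v : nat)).*2 = #|S| * N + N.
  rewrite -muln2 big_distrl /=. idtac.
  rewrite (eq_bigr (fun s => N + (s == pauli_id n) * N)); last first.
    move=> s sS; case: (eqVneq s (pauli_id n)) => [->|ns].
      rewrite muln2 (eq_bigr (fun _ => 1)); last by move=> v _; rewrite omega0.
      by rewrite sum_nat_const muln1 mul1n addnn.
    rewrite mul0n addn0 muln2 -card_sum.
    have [B hB] := nondeg ns.
    have hB' : omega B s by rewrite omegaC.
    have := half closedT (in_setT B) hB'.
    rewrite cardsT => h; rewrite /N -h; congr (_.*2); apply: eq_card => v; rewrite !inE omegaC.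
    done.
  rewrite big_split /= sum_nat_const (bigD1 (pauli_id n)) //= eqxx mul1n big1 ?addn0 //.
  by move=> s /andP[_ /negbTE ->].
have R : (\sum_v \sum_(s in S) (~~ omega s v : nat)).*2 = N * #|S| + #|perp S| * #|S|.
  rewrite -muln2 big_distrl /=.
  rewrite (eq_bigr (fun v => #|S| + (v \in perp S) * #|S|)); last first.
    move=> v _; case: (boolP (v \in perp S)) => hv.
      rewrite mul1n muln2 addnn (eq_bigr (fun _ => 1)); first by rewrite sum1_card.
      by move=> s sS; move: hv; rewrite inE => /forallP/(_ s); rewrite sS /= => ->.
    rewrite mul0n addn0 muln2 -card_sum_in.
    have [s sS hs] : exists2 s, s \in S & omega s v.
      move: hv; rewrite inE negb_forall => /existsP[s]; rewrite negb_imply negbK => /andP[? ?].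
      by exists s.
    exact: half cS sS hs.
  rewrite big_split /= sum_nat_const -big_distrl /= -card_sum.
  congr (_ * _ + _ * _); apply: eq_card => v; by rewrite inE.
move: L R; rewrite E => ->; lia.
Qed.

Definition iso (A : {set P}) := [forall x in A, forall y in A, ~~ omega x y].

Lemma isoP (A : {set P}) : reflect {in A &, forall x y, ~~ omega x y} (iso A).
Proof.
apply: (iffP forallP) => [h x y xA yA | h x].
  by move: (h x); rewrite xA /= => /forallP/(_ y); rewrite yA.
by apply/implyP => xA; apply/forallP => y; apply/implyP => yA; apply: h.
Qed.

Lemma iso_add x (A : {set P}) : iso A -> {in A, forall y, ~~ omega x y} -> iso (x |: A).
Proof.
move=> /isoP iA hx; apply/isoP => a b; rewrite !in_setU1.
case/orP=> [/eqP->|aA]; case/orP=> [/eqP->|bA].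
- by rewrite omegaK.
- exact: hx.
- by rewrite omegaC; apply: hx.
- exact: iA.
Qed.

Lemma card_P : #|{: P}| = 2 ^ n * 2 ^ n.
Proof.
rewrite card_ffun card_ord -expnMn.
have dK : cancel pauli1_decode pauli1_code by case=> [[] []].
by rewrite (bij_eq_card (Bijective pauli1_codeK dK)) card_prod card_bool.
Qed.

Lemma iso_bound (A : {set P}) : iso A -> #|A| <= 2 ^ n.
Proof.
move=> iA.
have iso0 : iso set0 by apply/isoP => x y; rewrite inE.
case: (arg_maxnP (fun B : {set P} => #|B|) iso0) => M isoM maxM.
have M0 : pauli_id n \in M.
  apply/negPn/negP => h.
  have : iso (pauli_id n |: M) by apply: iso_add => // y _; rewrite omega0.
  move/maxM; rewrite cardsU1 h; lia.
have cM : closed M.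
  move=> g h gM hM; apply/negPn/negP => nh.
  have : iso (padd g h |: M).
    apply: iso_add => // y yM; rewrite omegaD.
    by move/isoP: isoM => i; rewrite (negbTE (i _ _ gM yM)) (negbTE (i _ _ hM yM)).
  move/maxM; rewrite cardsU1 nh; lia.
have sub : #|M| <= #|perp M|.
  apply: subset_leq_card; apply/subsetP => x xM; rewrite inE; apply/forallP => s.
  by apply/implyP => sM; move/isoP: isoM; apply.
have := perp_card cM M0; rewrite card_P => e.
have := maxM _ iA.
have : #|M| * #|M| <= 2 ^ n * 2 ^ n by rewrite -e leq_mul2r sub orbT.
move: (2 ^ n) => x; nia.
Qed.

End S.

Lemma maxcls_key n (C : {set pauli n}) X : max_commuting_class C -> X \notin C ->
  X != pauli_id n -> {in C, forall V, ~~ omega X V} -> False.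
Proof.
move=> [cC nC iC] XC X0 hX.
have iC' : iso C by apply/isoP => x y xC yC; rewrite -commE; apply: iC.
have i2 : iso (pauli_id n |: C) by apply: iso_add => // y _; rewrite omega0.
have i3 : iso (X |: (pauli_id n |: C)).
  apply: iso_add => // y; rewrite in_setU1 => /orP[/eqP->|]; last exact: hX.
  by rewrite omegaC omega0.
have := iso_bound i3.
rewrite !cardsU1 in_setU1 negb_or X0 XC nC cC.
have := expn_gt0 2 n; lia.
Qed.

Lemma maxcls_closed n (C : {set pauli n}) : max_commuting_class C ->
  closed (pauli_id n |: C).
Proof.
move=> mC; have [cC nC iC] := mC.
move=> g h; rewrite !in_setU1.
case: (eqVneq g h) => [->|gh]; first by rewrite paddnn eqxx.
case/orP=> [/eqP->|gC]; first by rewrite paddC padd0.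
case/orP=> [/eqP->|hC]; first by rewrite padd0 gC orbT.
apply/orP; right; apply/negPn/negP => nY.
apply: (maxcls_key mC nY); first by rewrite padd_eq0.
move=> V VC; rewrite omegaD; move: (iC _ _ gC VC) (iC _ _ hC VC); rewrite !commE => /negbTE -> /negbTE -> //.
Qed.

Theorem lemma3 (n : nat) (Ci Cj : {set pauli n}) :
  max_commuting_class Ci -> max_commuting_class Cj ->
  Ci :&: Cj = set0 ->
  (forall U, U \in Ci ->
     #|[set V in Cj | pauli_commute U V]| = (2 ^ n.-1 - 1)%N) /\
  {in Ci &, forall U U',
     [set V in Cj | pauli_commute U V] = [set V in Cj | pauli_commute U' V] ->
     U = U'}.
Proof.
move=> mI mJ dis.
have [cI nI iI] := mI; have [cJ nJ iJ] := mJ.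
have notJ X : X \in Ci -> X \notin Cj.
  by move=> XI; apply/negP => XJ; move/setP/(_ X): dis; rewrite !inE XI XJ.
have nz X : X \in Ci -> X != pauli_id n.
  by move=> XI; apply/eqP => e; move: nI; rewrite -e XI.
split.
- move=> U UI.
  have [W WJ hW] : exists2 W, W \in Cj & omega W U.
    case: (boolP [forall V in Cj, ~~ omega U V]) => [/forallP h|].
      exfalso; apply: (maxcls_key mJ (notJ _ UI) (nz _ UI)) => V VJ.
      by move: (h V); rewrite VJ.
    rewrite negb_forall => /existsP[V]; rewrite negb_imply negbK => /andP[VJ hV].
    by exists V; rewrite // omegaC.
  have h := half (maxcls_closed mJ) (setU1r (pauli_id n) WJ) hW.
  have e : [set g in pauli_id n |: Cj | ~~ omega g U] =
           pauli_id n |: [set V in Cj | pauli_commute U V].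
    apply/setP => g; rewrite !inE commE; case: (eqVneq g (pauli_id n)) => [->|_] /=.
      by rewrite omega0.
    by rewrite omegaC.
  rewrite e !cardsU1 !inE (negbTE nJ) /= cJ in h.
  have : 0 < #|Ci| by apply/card_gt0P; exists U.
  rewrite cI => hp.
  have np : 0 < n by move: hp; case: (n) => //.
  have e2 : 2 ^ n = 2 * 2 ^ n.-1 by rewrite -expnS prednK.
  rewrite e2 in h.
  move: h (expn_gt0 2 n.-1); rewrite -muln2.
  move: (#|[set V in Cj | pauli_commute U V]|) (2 ^ n.-1) => t x; lia.
- move=> U U' UI U'I e; apply/eqP/negPn/negP => ne.
  have D0 : padd U U' != pauli_id n by rewrite padd_eq0.
  have DI : padd U U' \in Ci.
    by move: (maxcls_closed mI (setU1r _ UI) (setU1r _ U'I)); rewrite in_setU1 (negbTE D0).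
  apply: (maxcls_key mJ (notJ _ DI) D0) => V VJ.
  move/setP/(_ V): e; rewrite !inE VJ /= !commE => e.
  by rewrite omegaD -[omega U V]negbK e negbK addbb.
Qed.
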